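(* Fix a permutation $\pi_\alpha$ of $\mathcal{I}_L$ and $k\in\mathcal{I}_{2L-1}$, and let $\mathcal{M}_k=\{m\in\mathcal{I}_L: k\in\mathcal{J}_{\pi_\alpha^{-1}(m)}\}$. Then $|\mathcal{M}_k|=|\mathcal{L}_k|$, and the square submatrix $A(\mathcal{M}_k,\mathcal{L}_k)$ is invertible over $\mathbb{F}_\gamma$.
   Context: $\mathcal{I}_j=\{1,\dots,j\}$, $\mathcal{I}_0=\emptyset$, $\overline{\mathcal{S}}=\mathcal{I}_L\setminus\mathcal{S}$. Let $\gamma$ be a prime and $\Lambda_1\subseteq\Lambda_2\subseteq\cdots\subseteq\Lambda_{2L}$ a chain of nested lattices in $\mathbb{R}^n$. Let $\pi$ be a permutation of $\mathcal{I}_{2L}$ with $\Lambda_{\pi(2l-1)}\subseteq\Lambda_{\pi(2l)}$ for $l\in\mathcal{I}_L$, and set $\Lambda_{s,l}=\Lambda_{\pi(2l-1)}$, $\Lambda_{c,l}=\Lambda_{\pi(2l)}$. For $k\in\mathcal{I}_{2L-1}$, $\mathcal{L}_k=\{l\in\mathcal{I}_L:\Lambda_{s,l}\subseteq\Lambda_k\subseteq\Lambda_{k+1}\subseteq\Lambda_{c,l}\}$. $A=(a_{ml})\in\mathbb{Z}^{L\times L}$ is an integer matrix whose reduction mod $\gamma$ is invertible over $\mathbb{F}_\gamma$; $A(\mathcal{S},\mathcal{S}')$ is the submatrix with rows indexed by $\mathcal{S}$ and columns by $\mathcal{S}'$ (in increasing order); ranks and invertibility are over $\mathbb{F}_\gamma$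 after reduction mod $\gamma$, a matrix with no rows or no columns has rank $0$, and the $0\times0$ matrix counts as invertible. For a permutation $\pi_\alpha$ of $\mathcal{I}_L$, $\Pi_\alpha(\mathcal{S})=\{\pi_\alpha(i):i\in\mathcal{S}\}$ and for $m\in\mathcal{I}_L$, $\mathcal{J}_m=\{k\in\mathcal{I}_{2L-1}:\operatorname{rank}A(\Pi_\alpha(\overline{\mathcal{I}_{m-1}}),\mathcal{L}_k)=\operatorname{rank}A(\Pi_\alpha(\overline{\mathcal{I}_m}),\mathcal{L}_k)+1\}$. *)

(* Defs.v *)
From HB Require Import structures.
From mathcomp Require Import all_boot all_order all_algebra all_fingroup.
From mathcomp Require Import boolp reals.
Set Implicit Arguments. Unset Strict Implicit. Unset Printing Implicit Defensive.
Import GRing.Theory Num.Theory.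
Local Open Scope ring_scope.

Definition vsubset (R : realType) (n : nat) (X Y : 'rV[R]_n -> Prop) : Prop :=
  forall x, X x -> Y x.

Definition is_lattice (R : realType) (n : nat) (X : 'rV[R]_n -> Prop) : Prop :=
  exists B : 'M[R]_n, B \in unitmx /\
    forall x, X x <-> exists z : 'rV[int]_n, x = map_mx (fun a : int => a%:~R) z *m B.

(* 0-based indexing: I_{2L} ~ {0,...,2L-1}; pair l (0-based) uses pi(2l), pi(2l+1). *)
Lemma dbl_lt (L : nat) (l : 'I_L) : (l.*2 < L.*2)%N.
Proof. by rewrite ltn_double. Qed.
Lemma dbl1_lt (L : nat) (l : 'I_L) : (l.*2.+1 < L.*2)%N.
Proof. by rewrite ltn_Sdouble. Qed.

Definition sIdx (L : nat) (pi : 'S_(L.*2)) (l : 'I_L) : nat := pi (Ordinal (dbl_lt l)).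
Definition cIdx (L : nat) (pi : 'S_(L.*2)) (l : 'I_L) : nat := pi (Ordinal (dbl1_lt l)).

(* L_k, for 0-based k in {0,...,2L-2} (paper's k+1), uses Lambda_k and Lambda_{k+1}. *)
Definition Lset (R : realType) (n L : nat) (Lam : nat -> 'rV[R]_n -> Prop)
    (pi : 'S_(L.*2)) (k : nat) : {set 'I_L} :=
  [set l : 'I_L | `[< vsubset (Lam (sIdx pi l)) (Lam k) /\
                     vsubset (Lam k) (Lam k.+1) /\
                     vsubset (Lam k.+1) (Lam (cIdx pi l)) >]].

(* A(S,S'): rows S, columns S', both in increasing order. *)
Definition submxS (F : Type) (m p : nat) (M : 'M[F]_(m, p))
    (S : {set 'I_m}) (S' : {set 'I_p}) : 'M[F]_(#|S|, #|S'|) :=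
  \matrix_(i < #|S|, j < #|S'|) M (enum_val i) (enum_val j).

Definition modmx (gamma : nat) (m p : nat) (A : 'M[int]_(m, p)) : 'M['F_gamma]_(m, p) :=
  map_mx (fun a : int => a%:~R) A.

(* J_m for 0-based m (paper's m+1): overline(I_{m}) (paper) = {i | m <= i} (0-based). *)
Definition Jset (R : realType) (n L : nat) (Lam : nat -> 'rV[R]_n -> Prop)
    (pi : 'S_(L.*2)) (gamma : nat) (A : 'M[int]_L) (pia : 'S_L) (m : 'I_L)
    : {set 'I_(L.*2).-1} :=
  [set k : 'I_(L.*2).-1 |
     \rank (submxS (modmx gamma A) (pia @: [set i : 'I_L | (m <= i)%N]) (Lset Lam pi k))
     == (\rank (submxS (modmx gamma A) (pia @: [set i : 'I_L | (m < i)%N]) (Lset Lam pi k))).+1].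

Definition Mset (R : realType) (n L : nat) (Lam : nat -> 'rV[R]_n -> Prop)
    (pi : 'S_(L.*2)) (gamma : nat) (A : 'M[int]_L) (pia : 'S_L) (k : 'I_(L.*2).-1)
    : {set 'I_L} :=
  [set m : 'I_L | k \in Jset Lam pi gamma A pia ((pia^-1)%g m)].

(* Main.v *)
Require Import Defs.
From HB Require Import structures.
From mathcomp Require Import all_boot all_order all_algebra all_fingroup.
From mathcomp Require Import boolp reals.
Set Implicit Arguments. Unset Strict Implicit.
Import GRing.Theory Num.Theory.
Local Open Scope ring_scope.

Section Gen.
Variables (F : fieldType) (L c : nat) (B : 'M[F]_(L, c)).
Definition VV (S : {set 'I_L}) : 'M[F]_c := (\sum_(i in S) <<row i B>>)%MS.

Lemma VV_mono (S S' : {set 'I_L}) : S \subset S' -> (VV S <= VV S')%MS.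
Proof.
move=> sub; apply/sumsmx_subP => i iS; apply: (sumsmx_sup i).
  exact: (subsetP sub). by [].
Qed.

Lemma VV_add x (S : {set 'I_L}) : x \notin S -> (VV (x |: S) == VV S + row x B)%MS.
Proof.
move=> xS; rewrite /VV big_setU1 //= addsmxC; apply/eqmxP.
by apply: adds_eqmx => //; exact: genmxE.
Qed.

Lemma VV0 : VV set0 = 0.
Proof. by rewrite /VV big_set0. Qed.

Lemma VVT : (VV setT == B)%MS.
Proof.
apply/andP; split.
  by apply/sumsmx_subP => i _; rewrite genmxE row_sub.
apply/row_subP => i; apply: (sumsmx_sup i); first by rewrite in_setT.
by rewrite genmxE.
Qed.

Lemma VV_rank_step x (S : {set 'I_L}) : x \notin S ->
  (\rank (VV S) <= \rank (VV (x |: S)) <= (\rank (VV S)).+1)%N.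
Proof.
move=> xS; rewrite mxrankS ?VV_mono ?subsetUr //=.
rewrite (eqmxP (VV_add xS)).
apply: leq_trans (mxrank_adds_leqif _ _) _.
by rewrite -[X in (_ <= X)%N]addn1 leq_add2l rank_leq_row.
Qed.

Local Open Scope nat_scope.
Lemma VV_chain (T : nat -> {set 'I_L}) (D : {set 'I_L}) :
  T L = set0 ->
  (forall m, (m < L)%N -> exists2 x, T m = x |: T m.+1 /\ x \notin T m.+1 &
     (x \in D) = (\rank (VV (T m)) == (\rank (VV (T m.+1))).+1)) ->
  forall j, (j <= L)%N ->
    (VV (T (L - j)) == VV (D :&: T (L - j)))%MS /\
    \rank (VV (T (L - j))) = #|D :&: T (L - j)|.
Proof.
move=> TL Tstep; elim=> [|j IH] jL.
  by rewrite subn0 TL setI0 submx_refl cards0 VV0 mxrank0.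
have mL : (L - j.+1 < L)%N by rewrite ltn_subrL; apply/andP; split=> //; case: (L) jL.
have ej : (L - j.+1).+1 = L - j by rewrite subnSK.
have [IH1 IH2] := IH (ltnW jL).
have [x [eT xT] hD] := Tstep _ mL.
rewrite ej in eT xT hD.
set T' := T (L - j) in IH1 IH2 eT xT hD *.
rewrite eT in hD *.
have mono : (VV (D :&: (x |: T')) <= VV (x |: T'))%MS by apply: VV_mono; exact: subsetIr.
have [rl ru] := andP (VV_rank_step xT).
case xD: (x \in D).
  have eDT : D :&: (x |: T') = x |: (D :&: T').
    by rewrite setIUr (setIidPr _) // sub1set.
  have xDT : x \notin D :&: T' by rewrite inE negb_and xT orbT.
  have sub : (VV (x |: T') <= VV (D :&: (x |: T')))%MS.
    rewrite (eqmxP (VV_add xT)) eDT (eqmxP (VV_add xDT)).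
    by apply: addsmxS => //; case/andP: IH1.
  split; first by rewrite sub mono.
  by rewrite eDT cardsU1 xDT -IH2; move: hD; rewrite xD => /esym/eqP ->; rewrite add1n.
have eDT : D :&: (x |: T') = D :&: T'.
  by rewrite setIUr; apply/setP => y; rewrite !inE; case: (y =P x) => [->|]; rewrite ?xD //= andbF.
have er : \rank (VV (x |: T')) = \rank (VV T').
  apply/eqP; rewrite eqn_leq rl andbT; move: hD; rewrite xD => /esym/negbT.
  by rewrite eqn_leq ru /= -ltnNge ltnS.
have eq2 : (VV T' == VV (x |: T'))%MS.
  by rewrite -(mxrank_leqif_eq (@VV_mono T' (x |: T') (subsetUr _ _))) er.
rewrite eDT -IH2 er; split=> //.
apply/andP; split; last by rewrite -eDT mono.
by apply: submx_trans (proj2 (andP eq2)) _; case/andP: IH1.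
Qed.
End Gen.
Section Sel.
Variables (F : fieldType) (L L' : nat) (M : 'M[F]_(L, L')) (C : {set 'I_L'}).
Definition Bsel : 'M[F]_(L, #|C|) := \matrix_(i < L, j < #|C|) M i (enum_val j).

Lemma sub_VV (S : {set 'I_L}) : (submxS M S C == VV Bsel S)%MS.
Proof.
apply/andP; split.
  apply/row_subP => j.
  have -> : row j (submxS M S C) = row (enum_val j) Bsel.
    by apply/rowP => l; rewrite !mxE.
  apply: (sumsmx_sup (enum_val j)); first exact: enum_valP.
  by rewrite genmxE.
apply/sumsmx_subP => i iS; rewrite genmxE.
have -> : row i Bsel = row (enum_rank_in iS i) (submxS M S C).
  by apply/rowP => l; rewrite !mxE enum_rankK_in.
exact: row_sub.
Qed.
End Sel.

Lemma rank_Bsel (F : fieldType) (L : nat) (M : 'M[F]_L) (C : {set 'I_L}) :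
  M \in unitmx -> \rank (Bsel M C) = #|C|.
Proof.
move=> Mu.
pose P : 'M[F]_(L, #|C|) := \matrix_(i < L, j < #|C|) (i == enum_val j)%:R.
have -> : Bsel M C = M *m P.
  apply/matrixP => i j; rewrite !mxE (bigD1 (enum_val j)) //= big1 => [|l ne].
    by rewrite !mxE eqxx mulr1 addr0.
  by rewrite !mxE (negbTE ne) mulr0.
rewrite -mxrank_tr trmx_mul mxrankMfree; last by rewrite row_free_unit unitmx_tr.
rewrite mxrank_tr; apply/eqP; rewrite eqn_leq rank_leq_col /=.
have PP : P^T *m P = 1%:M.
  apply/matrixP => j j'; rewrite !mxE (bigD1 (enum_val j)) //= big1 => [|l ne].
    by rewrite !mxE eqxx mul1r addr0 (inj_eq enum_val_inj).
  by rewrite !mxE (negbTE ne) mul0r.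
by rewrite -mxrank_tr -{1}(mxrank1 F #|C|) -PP mxrankM_maxl.
Qed.

Lemma castmx_unit (F : fieldType) (a b : nat) (e : a = b) (X : 'M[F]_(a, b)) :
  \rank X = a -> castmx (e, erefl) X \in unitmx.
Proof.
move=> r; subst b; rewrite castmx_id -row_free_unit /row_free r.
by [].
Qed.
Unset Implicit Arguments.
Theorem lemma1 (R : realType) (n L : nat) (Lam : nat -> 'rV[R]_n -> Prop)
    (pi : 'S_(L.*2)) (gamma : nat) (A : 'M[int]_L) (pia : 'S_L)
    (k : 'I_(L.*2).-1) :
  prime gamma ->
  (forall i, (i < L.*2)%N -> is_lattice (Lam i)) ->
  (forall i, (i.+1 < L.*2)%N -> vsubset (Lam i) (Lam i.+1)) ->
  (forall l : 'I_L, vsubset (Lam (sIdx pi l)) (Lam (cIdx pi l))) ->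
  modmx gamma A \in unitmx ->
  #|Mset Lam pi gamma A pia k| = #|Lset Lam pi k| /\
  forall e : #|Mset Lam pi gamma A pia k| = #|Lset Lam pi k|,
    castmx (e, erefl) (submxS (modmx gamma A) (Mset Lam pi gamma A pia k) (Lset Lam pi k))
      \in unitmx.
Proof.
move=> _ _ _ _ Mu.
set M := modmx gamma A; set C := Lset Lam pi k; set D := Mset Lam pi gamma A pia k.
set B := Bsel M C.
pose T (m : nat) : {set 'I_L} := pia @: [set i : 'I_L | (m <= i)%N].
have rkS S : \rank (submxS M S C) = \rank (VV B S) by apply: eqmx_rank; exact: sub_VV.
have TL : T L = set0.
  apply/setP => y; rewrite !inE; apply/negbTE/imsetP => -[i]; rewrite inE.
  by rewrite leqNgt ltn_ord.
have Tstep m : (m < L)%N -> exists2 x, T m = x |: T m.+1 /\ x \notin T m.+1 &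
     (x \in D) = (\rank (VV B (T m)) == (\rank (VV B (T m.+1))).+1).
  move=> mL; exists (pia (Ordinal mL)).
    rewrite /T mem_imset ?inE /= ?ltnn; last exact: perm_inj.
    split=> //.
    have E : [set i : 'I_L | (m <= i)%N] = Ordinal mL |: [set i : 'I_L | (m < i)%N].
      apply/setP => i; rewrite !inE.
      rewrite leq_eqVlt; case: (i =P Ordinal mL) => [->|ne]; first by rewrite eqxx.
      congr orb; apply/eqP => em; apply: ne.
      exact: val_inj.
    by rewrite E imsetU1.
  by rewrite /D /Mset inE permK /Jset inE -!rkS.
have [H1 H2] := VV_chain TL Tstep (leqnn L).
rewrite subnn in H1 H2.
have T0 : T 0%N = setT.
  apply/setP => y; rewrite !inE; apply/imsetP; exists ((pia^-1)%g y); first by rewrite inE.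
  by rewrite permKV.
rewrite T0 setIT in H1 H2.
have rB : \rank (VV B setT) = #|C| by rewrite (eqmx_rank (VVT B)) rank_Bsel.
have cD : #|D| = #|C| by rewrite -H2 rB.
split=> // e; apply: castmx_unit.
by rewrite rkS -(eqmx_rank H1) rB.
Qed.
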